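(* For $n \in \mathbb{N}_0$ let $\kappa(n)$ denote the maximal number of consecutive $1$s in the binary expansion of $n$ (so $\kappa(0)=0$, and e.g. $\kappa(1234)=\kappa([10011010010]_2)=2$). Define $f\colon\mathbb{N}_0\to\{0,1\}$ by $f(n)=1$ if $\kappa(n)$ is odd and $f(n)=0$ otherwise. Then $f$ is asymptotically $2$-automatic but there is no $2$-automatic sequence $\tilde f\colon\mathbb{N}_0\to\{0,1\}$ with $f\simeq\tilde f$.
   Context: $\mathbb{N}_0=\{0,1,2,\dots\}$. A property holds for almost all $n\in\mathbb{N}_0$ if the set of $n$ where it fails has upper density $\limsup_{N\to\infty}|\cdot\cap\{0,\dots,N-1\}|/N$ equal to $0$. Sequences $f,g$ are asymptotically equal, $f\simeq g$, if $f(n)=g(n)$ for almost all $n$. The $k$-kernel of $f$ is $\mathcal{N}_k(f) = \{ n \mapsto f(k^\alpha n + r) : \alpha, r \in \mathbb{N}_0,\ r < k^\alpha\}$; $f$ is $k$-automatic if $\mathcal{N}_k(f)$ is finite, and asymptotically $k$-automatic if $\mathcal{N}_k(f)/{\simeq}$ is finite. *)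

(* Defs.v *)
From mathcomp Require Import all_boot.
Set Implicit Arguments. Unset Strict Implicit. Unset Printing Implicit Defensive.

Definition count_below (P : pred nat) (N : nat) : nat := count P (iota 0 N).

(* The set {n | P n} has upper density 0:
   limsup_{N->oo} |{n < N | P n}| / N = 0, i.e. for every k > 0 we have
   |{n < N | P n}| / N <= 1/k for all sufficiently large N. *)
Definition upper_density_zero (P : pred nat) : Prop :=
  forall k : nat, 0 < k -> exists N0 : nat, forall N : nat, N0 <= N ->
    k * count_below P N <= N.

Definition almost_all (P : pred nat) : Prop :=
  upper_density_zero (fun n => ~~ P n).

Definition asym_eq (T : eqType) (f g : nat -> T) : Prop :=
  almost_all (fun n => f n == g n).

Definition kernel_elt (T : Type) (k : nat) (f : nat -> T) (a r : nat) : nat -> T :=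
  fun n => f (k ^ a * n + r).

Definition automatic (T : Type) (k : nat) (f : nat -> T) : Prop :=
  exists (m : nat) (g : nat -> nat -> T),
    forall a r : nat, r < k ^ a ->
      exists i : nat, i < m /\ forall n, kernel_elt k f a r n = g i n.

Definition asym_automatic (T : eqType) (k : nat) (f : nat -> T) : Prop :=
  exists (m : nat) (g : nat -> nat -> T),
    forall a r : nat, r < k ^ a ->
      exists i : nat, i < m /\ asym_eq (kernel_elt k f a r) (g i).

(* Binary digits of n, least significant first (no leading zeros; [::] for 0). *)
Fixpoint binary_digits_aux (fuel n : nat) : seq bool :=
  match fuel with
  | 0 => [::]
  | fuel'.+1 => if n == 0 then [::] else odd n :: binary_digits_aux fuel' n./2
  end.
Definition binary_digits (n : nat) : seq bool := binary_digits_aux n n.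

(* (length of the run of trues at the head, longest run of trues) *)
Fixpoint runs (s : seq bool) : nat * nat :=
  match s with
  | [::] => (0, 0)
  | b :: t => let: (c, m) := runs t in
              let c' := if b then c.+1 else 0 in (c', maxn m c')
  end.

Definition kappa (n : nat) : nat := (runs (binary_digits n)).2.

Definition f_kappa (n : nat) : nat := if odd (kappa n) then 1 else 0.

Lemma kappa_examples : [:: kappa 0; kappa 1234; kappa 7; kappa 0x1D] = [:: 0; 2; 3; 3].
Proof. by vm_compute. Qed.

(* Main.v *)
Require Import Defs.
From mathcomp Require Import all_boot.
From mathcomp Require Import zify.
From Stdlib Require Import ClassicalEpsilon.
Set Implicit Arguments. Unset Strict Implicit. Unset Printing Implicit Defensive.


Fixpoint bitsN (a r : nat) : seq bool :=
  if a is a'.+1 then odd r :: bitsN a' r./2 else [::].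
Fixpoint valL (s : seq bool) : nat :=
  if s is b :: t then b + (valL t).*2 else 0.

Definition lead (s : seq bool) := (runs s).1.
Definition kl (s : seq bool) := (runs s).2.

Lemma runs_cons b t : runs (b :: t) =
  (if b then (lead t).+1 else 0, maxn (kl t) (if b then (lead t).+1 else 0)).
Proof. by rewrite /= /lead /kl; case: (runs t). Qed.

Lemma lead_cons b t : lead (b :: t) = if b then (lead t).+1 else 0.
Proof. by rewrite /lead runs_cons. Qed.
Lemma kl_cons b t : kl (b :: t) = maxn (kl t) (lead (b :: t)).
Proof. by rewrite /kl lead_cons runs_cons. Qed.
Lemma lead_nil : lead [::] = 0. Proof. by []. Qed.
Lemma kl_nil : kl [::] = 0. Proof. by []. Qed.

Lemma lead_le_kl s : lead s <= kl s.
Proof. case: s => [|b t] //; rewrite kl_cons; apply: leq_maxr. Qed.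

Lemma kl_size s : kl s <= size s.
Proof.
elim: s => [|b t IH] //; rewrite kl_cons lead_cons /= geq_max.
have := lead_le_kl t; case: b; lia.
Qed.

Lemma lead_cat_ge s1 s2 : lead s1 <= lead (s1 ++ s2).
Proof. elim: s1 => [|b t IH] //=; rewrite !lead_cons; case: b => //. Qed.

Lemma kl_cat_l s1 s2 : kl s1 <= kl (s1 ++ s2).
Proof.
elim: s1 => [|b t IH] //=; rewrite !kl_cons geq_max.
have := lead_cat_ge (b :: t) s2. rewrite /= => H.
apply/andP; split; [apply: leq_trans IH (leq_maxl _ _) | apply: leq_trans H (leq_maxr _ _)].
Qed.

Lemma kl_cat_r s1 s2 : kl s2 <= kl (s1 ++ s2).
Proof. elim: s1 => [|b t IH] //=; rewrite kl_cons; apply: leq_trans IH (leq_maxl _ _). Qed.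

Lemma lead_cat_le s1 s2 : lead (s1 ++ s2) <= size s1 + lead s2.
Proof. elim: s1 => [|b t IH] //=; rewrite lead_cons; case: b => //; lia. Qed.

Lemma kl_cat_le s1 s2 : kl (s1 ++ s2) <= maxn (kl s2) (size s1 + lead s2).
Proof.
elim: s1 => [|b t IH] /=; first by rewrite leq_maxl.
rewrite kl_cons geq_max; have := lead_cat_le (b :: t) s2; rewrite /= => H.
move: IH H; lia.
Qed.

Lemma lead_cat_false s1 s2 : lead (s1 ++ false :: s2) = lead s1.
Proof. elim: s1 => [|b t IH] /=; first by rewrite lead_cons. by rewrite !lead_cons IH. Qed.

Lemma kl_cat_false s1 s2 : kl (s1 ++ false :: s2) = maxn (kl s1) (kl s2).
Proof.
elim: s1 => [|b t IH] /=; first by rewrite kl_cons lead_cons /= max0n maxn0.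
rewrite !kl_cons IH.
have -> : lead (b :: t ++ false :: s2) = lead (b :: t) by rewrite -cat_cons lead_cat_false.
rewrite -!maxnA [maxn (kl s2) _]maxnC //.
Qed.

Lemma aux_stable f1 f2 n : n <= f1 -> n <= f2 ->
  binary_digits_aux f1 n = binary_digits_aux f2 n.
Proof.
elim: f1 f2 n => [|f1 IH] [|f2] n /=.
- by [].
- by rewrite leqn0 => /eqP -> _.
- by move=> _; rewrite leqn0 => /eqP ->.
- move=> h1 h2; case: eqP => // nz; congr (_ :: _); apply: IH.
  + lia.
  + lia.
Qed.

Lemma D_eq n : binary_digits n =
  if n == 0 then [::] else odd n :: binary_digits n./2.
Proof.
rewrite /binary_digits; case: n => [|n] //=.
congr (_ :: _); apply: aux_stable => //; lia.
Qed.

Lemma size_bitsN a r : size (bitsN a r) = a.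
Proof. by elim: a r => [|a IH] r //=; rewrite IH. Qed.

Lemma valL_bitsN a r : r < 2 ^ a -> valL (bitsN a r) = r.
Proof.
elim: a r => [|a IH] r /=; first by case: r.
move=> h; rewrite IH; first by lia.
move: h; rewrite expnS; lia.
Qed.

Lemma bitsN_valL s : bitsN (size s) (valL s) = s.
Proof.
elim: s => [|b t IH] //=; congr (_ :: _).
- by case: b; lia.
- rewrite -[X in _ = X]IH; congr bitsN; case: b; lia.
Qed.

Lemma valL_lt s : valL s < 2 ^ size s.
Proof. elim: s => [|b t IH] //=; rewrite expnS; case: b => /=; lia. Qed.

Lemma bitsN_rcons a r : r < 2 ^ a -> bitsN a.+1 r = rcons (bitsN a r) false.
Proof.
elim: a r => [|a IH] r h; first by case: r h.
change (bitsN a.+2 r) with (odd r :: bitsN a.+1 r./2).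
rewrite IH //; move: h; rewrite expnS; lia.
Qed.

Lemma RL a n r : r < 2 ^ a ->
  runs (bitsN a r ++ binary_digits n) = runs (binary_digits (2 ^ a * n + r)).
Proof.
elim: a r => [|a IH] r /=; first by case: r => // _; rewrite expn0 mul1n addn0.
move=> h.
have h2 : r./2 < 2 ^ a by move: h; rewrite expnS; lia.
rewrite IH //.
set y := 2 ^ a * n + r./2.
have ez : 2 ^ a.+1 * n + r = odd r + y.*2.
  rewrite /y expnS -mulnA; lia.
rewrite ez [binary_digits (odd r + _)]D_eq.
case: eqP => [z0|nz].
- have y0 : y = 0 by lia.
  have o0 : odd r = false by move: z0; case: (odd r).
  by rewrite y0 o0.
- 
  have -> : odd (odd r + y.*2) = odd r by case: (odd r); lia.
  have -> : (odd r + y.*2)./2 = y by case: (odd r); lia.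
  by [].
Qed.

Lemma kl_D n : kl (binary_digits n) = kappa n. Proof. by []. Qed.

Lemma kappa_cat a n r : r < 2 ^ a ->
  kappa (2 ^ a * n + r) = kl (bitsN a r ++ binary_digits n).
Proof. by move=> h; rewrite /kappa /kl RL. Qed.

Lemma lead_cat a n r : r < 2 ^ a ->
  lead (binary_digits (2 ^ a * n + r)) = lead (bitsN a r ++ binary_digits n).
Proof. by move=> h; rewrite /lead RL. Qed.

Lemma kl_bitsN a r : r < 2 ^ a -> kl (bitsN a r) = kappa r.
Proof.
move=> h; have := kappa_cat 0 h; rewrite muln0 add0n => ->.
have -> : binary_digits 0 = [::] by []. by rewrite cats0.
Qed.

Lemma kappa_valL s : kappa (valL s) = kl s.
Proof. by rewrite -(kl_bitsN (valL_lt s)) bitsN_valL. Qed.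

Lemma count_mono (P : pred nat) N N' : N <= N' ->
  count P (iota 0 N) <= count P (iota 0 N').
Proof. by move=> h; rewrite -(subnKC h) iotaD count_cat leq_addr. Qed.

Lemma count_le_in (P Q : pred nat) s : (forall x, x \in s -> P x -> Q x) ->
  count P s <= count Q s.
Proof.
elim: s => [|x s IH] //= h; apply: leq_add; last first.
  by apply: IH => y ys; apply: h; rewrite inE ys orbT.
by case: (boolP (P x)) => // /(h x (mem_head _ _)) ->.
Qed.

Lemma count_sub_uniq (P : pred nat) s1 s2 : uniq s1 -> {subset s1 <= s2} ->
  count P s1 <= count P s2.
Proof.
move=> u sub; rewrite -!size_filter; apply: uniq_leq_size; first exact: filter_uniq.
by move=> x; rewrite !mem_filter => /andP [-> /sub].
Qed.

Lemma iota_shift A B : iota (A * B) A = map (addn (A * B)) (iota 0 A).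
Proof. by rewrite -iotaDl addn0. Qed.

Lemma block_le (P G : pred nat) A B R :
  (forall n, n < B -> count (fun r => P (A * n + r)) (iota 0 A) <= G n * R) ->
  count P (iota 0 (A * B)) <= count G (iota 0 B) * R.
Proof.
elim: B => [|B IH] h; first by rewrite muln0.
rewrite mulnS addnC iotaD count_cat add0n -addn1 iotaD count_cat add0n /=.
rewrite iota_shift count_map addn0 mulnDl ?mul1n; apply: leq_add.
  by apply: IH => n nB; apply: h; lia.
exact: (h B (ltnSn B)).
Qed.

Lemma block_ge (P G : pred nat) A B R :
  (forall n, n < B -> G n * R <= count (fun r => P (A * n + r)) (iota 0 A)) ->
  count G (iota 0 B) * R <= count P (iota 0 (A * B)).
Proof.
elim: B => [|B IH] h; first by rewrite muln0.
rewrite mulnS addnC iotaD count_cat add0n -addn1 iotaD count_cat add0n /=.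
rewrite iota_shift count_map addn0 mulnDl ?mul1n; apply: leq_add.
  by apply: IH => n nB; apply: h; lia.
exact: (h B (ltnSn B)).
Qed.

Lemma udz_sub (P Q : pred nat) : (forall n, P n -> Q n) ->
  upper_density_zero Q -> upper_density_zero P.
Proof.
move=> hPQ hQ k k0; have [N0 H] := hQ k k0; exists N0 => N hN.
apply: leq_trans (H N hN); rewrite leq_mul2l; apply/orP; right.
by apply: sub_count => x /hPQ.
Qed.

Lemma udz_or (P Q : pred nat) : upper_density_zero P -> upper_density_zero Q ->
  upper_density_zero (fun n => P n || Q n).
Proof.
move=> hP hQ k k0.
have [N1 H1] := hP (2 * k) ltac:(lia).
have [N2 H2] := hQ (2 * k) ltac:(lia).
exists (maxn N1 N2) => N hN.
have h1 := H1 N ltac:(lia). have h2 := H2 N ltac:(lia).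
rewrite /count_below in h1 h2 *.
have : count (fun n => P n || Q n) (iota 0 N) <= count P (iota 0 N) + count Q (iota 0 N).
  rewrite -count_predUI; apply: leq_trans (leq_addr _ _).
  by apply: sub_count => x /=.
move: h1 h2; nia.
Qed.

Lemma udz_has (T : eqType) (h : T -> pred nat) (s : seq T) :
  (forall i, i \in s -> upper_density_zero (h i)) ->
  upper_density_zero (fun n => has (fun i => h i n) s).
Proof.
elim: s => [|i s IH] hs /=.
  by move=> k k0; exists 0 => N _; rewrite /count_below (count_pred0 (iota 0 N)) muln0.
apply: udz_or; first by apply: hs; rewrite mem_head.
by apply: IH => j js; apply: hs; rewrite inE js orbT.
Qed.

Lemma udz_affine (P : pred nat) A r : 0 < A -> r < A ->
  upper_density_zero P -> upper_density_zero (fun n => P (A * n + r)).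
Proof.
move=> A0 rA hP k k0.
have [N0 H] := hP (k * A) ltac:(nia).
exists N0 => N hN.
have hc : count (fun n => P (A * n + r)) (iota 0 N) <= count P (iota 0 (A * N)).
  have -> : count (fun n => P (A * n + r)) (iota 0 N) =
            count P (map (fun n => A * n + r) (iota 0 N)) by rewrite count_map.
  apply: count_sub_uniq.
    rewrite map_inj_in_uniq ?iota_uniq // => x y _ _ /eqP; rewrite eqn_add2r.
    by rewrite eqn_mul2l; case/orP => [/eqP A00|/eqP //]; move: A0; rewrite A00.
  move=> x /mapP [n]; rewrite mem_iota add0n => nN ->; rewrite mem_iota add0n.
  nia.
have := H (A * N) ltac:(nia).
rewrite /count_below in hc *.
move=> h2; have h3 := leq_mul (leqnn (k * A)) hc.
rewrite -(leq_pmul2l A0); apply: leq_trans h2; move: h3; lia.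
Qed.

Lemma lead_ones L : lead (bitsN L (2 ^ L - 1)) = L.
Proof.
elim: L => [|L IH] //.
change (bitsN L.+1 (2 ^ L.+1 - 1)) with
  (odd (2 ^ L.+1 - 1) :: bitsN L (2 ^ L.+1 - 1)./2).
have p := expn_gt0 2 L; rewrite expnS.
have -> : odd (2 * 2 ^ L - 1) = true by lia.
have -> : (2 * 2 ^ L - 1)./2 = 2 ^ L - 1 by lia.
by rewrite lead_cons IH.
Qed.

Lemma kappa_ge_n a n r : r < 2 ^ a -> kappa n <= kappa (2 ^ a * n + r).
Proof. by move=> h; rewrite kappa_cat // -kl_D kl_cat_r. Qed.

Lemma kappa_ge_r a n r : r < 2 ^ a -> kappa r <= kappa (2 ^ a * n + r).
Proof. by move=> h; rewrite kappa_cat // -(kl_bitsN h) kl_cat_l. Qed.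

Lemma bernoulli q t : q ^ t * (q + t) <= (q + 1) ^ t * q.
Proof.
elim: t => [|t IH]; first by rewrite !expn0 addn0.
have h : q ^ t <= (q + 1) ^ t.
  by case: t {IH} => [|t] //; rewrite leq_exp2r ?leq_addr.
rewrite !expnS; nia.
Qed.

Lemma kappa_small_udz L : upper_density_zero (fun n => kappa n < L).
Proof.
set C := fun N => count (fun n => kappa n < L) (iota 0 N).
set q := 2 ^ L - 1.
have A0 : 0 < 2 ^ L by rewrite expn_gt0.
have hA : 2 ^ L = q + 1 by rewrite /q; lia.
have step : forall M, C (2 ^ L * M) <= C M * q.
  move=> M; apply: block_le => n _.
  case: (ltnP (kappa n) L) => hn /=.
  - rewrite mul1n hA iotaD count_cat add0n /= addn0 -hA.
    have -> : (kappa (2 ^ L * n + q) < L) = false.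
      apply/negbTE; rewrite -leqNgt; apply: leq_trans (kappa_ge_r n _); last by lia.
      by rewrite -(@kl_bitsN L); [rewrite /q -{1}(lead_ones L) lead_le_kl | lia].
    by rewrite addn0 (leq_trans (count_size _ _)) // size_iota.
  - rewrite mul0n; apply: leq_trans (_ : count pred0 (iota 0 (2 ^ L)) <= 0).
      apply: count_le_in => r; rewrite mem_iota add0n /= => rL hr.
      by have := kappa_ge_n n rL; lia.
    by rewrite count_pred0.
have iter : forall t M, C ((2 ^ L) ^ t * M) <= C M * q ^ t.
  elim=> [|t IH] M; first by rewrite !expn0 mul1n muln1.
  rewrite expnS -mulnA; apply: leq_trans (step _) _.
  rewrite expnS mulnA -(mulnAC (C M)) leq_mul2r IH orbT //.
move=> k k0.
set t := 2 * k * q + 1.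
have hb : 2 * k * q ^ t <= (2 ^ L) ^ t.
  have := bernoulli q t; rewrite hA.
  case: (posnP q) => [q0|qp].
    rewrite q0 exp0n ?addn1 //; lia.
  move=> hb; rewrite -(leq_pmul2r qp); apply: leq_trans hb.
  rewrite /t; nia.
exists (2 * k * q ^ t) => N hN.
set P := (2 ^ L) ^ t.
have P0 : 0 < P by rewrite /P expn_gt0 A0.
have hC : C N <= q ^ t * (N %/ P + 1).
  apply: leq_trans (_ : C (P * (N %/ P + 1)) <= _).
    apply: count_mono; rewrite mulnDr muln1 {1}(divn_eq N P) mulnC leq_add2l.
    by rewrite ltnW // ltn_pmod.
  by apply: leq_trans (iter t _) _; rewrite mulnC leq_mul2l (leq_trans (count_size _ _)) ?size_iota ?orbT.
have hd : P * (N %/ P) <= N by rewrite mulnC leq_divM.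
rewrite /count_below -/(C N).
have e1 := leq_mul (leqnn k) hC.
have e2 := leq_mul hb (leqnn (N %/ P)).
move: e1 e2 hd hN; rewrite -/P; nia.
Qed.

Lemma lead_ones_inv T r s : r < 2 ^ T -> T <= lead (bitsN T r ++ s) -> r = 2 ^ T - 1.
Proof.
elim: T r => [|T IH] r; first by case: r.
move=> h; change (bitsN T.+1 r) with (odd r :: bitsN T r./2).
rewrite cat_cons lead_cons; case: (boolP (odd r)) => // o.
have h2 : r./2 < 2 ^ T by move: h; rewrite expnS; lia.
rewrite ltnS => /(IH _ h2) e.
move: h o e; rewrite expnS; lia.
Qed.

Lemma trail_count T N :
  count (fun x => T <= lead (binary_digits x)) (iota 0 N) <= N %/ 2 ^ T + 1.
Proof.
have A0 : 0 < 2 ^ T by rewrite expn_gt0.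
apply: leq_trans (_ : count (fun x => T <= lead (binary_digits x))
                        (iota 0 (2 ^ T * (N %/ 2 ^ T + 1))) <= _).
  apply: count_mono; rewrite mulnDr muln1 {1}(divn_eq N (2 ^ T)) mulnC leq_add2l.
  by rewrite ltnW // ltn_pmod.
have := @block_le (fun x => T <= lead (binary_digits x)) predT (2 ^ T) (N %/ 2 ^ T + 1) 1.
rewrite muln1 => H; apply: leq_trans (H _) _; last first.
  by rewrite count_predT size_iota.
move=> n _; rewrite muln1 /=.
apply: leq_trans (_ : count (pred1 (2 ^ T - 1)) (iota 0 (2 ^ T)) <= 1).
  apply: count_le_in => r; rewrite mem_iota add0n /= => rT.
  by rewrite lead_cat // => /lead_ones_inv -> .
by rewrite count_uniq_mem ?iota_uniq ?leq_b1.
Qed.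

Lemma kappa_upper a n r : r < 2 ^ a ->
  kappa (2 ^ a * n + r) <= maxn (kappa n) (a + lead (binary_digits n)).
Proof.
move=> h; rewrite kappa_cat //; apply: leq_trans (kl_cat_le _ _) _.
by rewrite size_bitsN kl_D.
Qed.

Lemma lemmaA a r : r < 2 ^ a ->
  upper_density_zero (fun n => ~~ (f_kappa (2 ^ a * n + r) == f_kappa n)).
Proof.
move=> h k k0.
set T := 4 * k.
have hT : 4 * k <= 2 ^ T by apply: ltnW; apply: ltn_expl.
have [N1 H1] := @kappa_small_udz (a + T) (2 * k) ltac:(lia).
exists (maxn N1 (4 * k)) => N hN.
have h1 := H1 N ltac:(lia).
rewrite /count_below in h1 *.
have hsub : count (fun n => ~~ (f_kappa (2 ^ a * n + r) == f_kappa n)) (iota 0 N) <=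
   count (fun n => kappa n < a + T) (iota 0 N) +
   count (fun x => T <= lead (binary_digits x)) (iota 0 N).
  rewrite -count_predUI; apply: leq_trans (leq_addr _ _).
  apply: sub_count => n /=; apply: contraR; rewrite negb_or -!leqNgt => /andP [h2 h3].
  have e1 := kappa_ge_n n h; have e2 := kappa_upper n h.
  rewrite /f_kappa; have -> : kappa (2 ^ a * n + r) = kappa n by lia.
  by [].
have h2 := trail_count T N.
have h3 : 4 * k * (N %/ 2 ^ T) <= N.
  apply: leq_trans (leq_divM N (2 ^ T)); rewrite mulnC leq_mul2l hT orbT //.
move: hsub h1 h2 h3 hN; nia.
Qed.

Fixpoint insK (K : nat) (s : seq bool) : seq bool :=
  match s with
  | [::] => [::]
  | b :: t => if b && (lead (b :: t) == K) then true :: b :: t else b :: insK K t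
  end.
Fixpoint delK (K : nat) (s : seq bool) : seq bool :=
  match s with
  | [::] => [::]
  | b :: t => if b && (lead (b :: t) == K) then t else b :: delK K t
  end.

Lemma kl_consK b t K : kl (b :: t) <= K -> kl t <= K /\ lead (b :: t) <= K.
Proof. by rewrite kl_cons geq_max => /andP. Qed.

Lemma lead_ins K s : 0 < K -> kl s <= K ->
  lead (insK K s) = if lead s == K then K.+1 else lead s.
Proof.
move=> K0; elim: s => [|b t IH]; first by move=> _; case: K K0.
move=> /kl_consK [h1 h2]; have h3 := lead_le_kl t.
rewrite [insK K (b :: t)]/=; case: b h2 => /= h2; rewrite !lead_cons in h2 *.
- case: eqP => [e|ne]; first by rewrite !lead_cons e.
  rewrite lead_cons IH //; case: eqP => [e2|_]; first by lia.
  by [].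
- by case: eqP => // e; move: K0; rewrite -e.
Qed.

Lemma lead_ins_cons K b t : 0 < K -> kl (b :: t) <= K ->
  ~~ (b && (lead (b :: t) == K)) -> lead (b :: insK K t) = lead (b :: t).
Proof.
move=> K0 /kl_consK [h1 h2]; move: h2; rewrite !lead_cons; case: b => //= h2 ne.
rewrite lead_ins //; case: eqP => // e; lia.
Qed.

Lemma kl_ins K s : 0 < K -> kl s <= K ->
  kl (insK K s) = if kl s == K then K.+1 else kl s.
Proof.
move=> K0; elim: s => [|b t IH]; first by move=> _; case: K K0.
move=> hk; have [h1 h2] := kl_consK hk.
rewrite [insK K (b :: t)]/=; case: ifP => [/andP [hb /eqP e]|ne].
  have kK : kl (b :: t) = K by apply/eqP; rewrite eqn_leq hk -e lead_le_kl.
  rewrite kl_cons [lead (true :: _)]lead_cons /= e kK eqxx; lia.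
rewrite kl_cons lead_ins_cons ?ne // IH // [kl (b :: t)]kl_cons.
have hl : lead (b :: t) <> K.
  case: b ne {hk h2} => /= ne; first by move/eqP; rewrite ne.
  by rewrite lead_cons; lia.
case: eqP => e1; case: eqP => e2; lia.
Qed.

Lemma del_ins K s : 0 < K -> kl s <= K -> delK K.+1 (insK K s) = s.
Proof.
move=> K0; elim: s => [|b t IH] //= hk; have [h1 h2] := kl_consK hk.
case: ifP => [/andP [hb /eqP e]|ne] /=.
  by rewrite [lead [:: true, b & t]]lead_cons /= e eqxx.
rewrite lead_ins_cons ?ne // IH //.
by case: ifP => // /andP [_ /eqP e]; move: h2; rewrite e; lia.
Qed.

Lemma size_ins K s : 0 < K -> kl s <= K -> size (insK K s) = size s + (kl s == K).
Proof.
move=> K0; elim: s => [|b t IH]; first by move=> _; case: K K0.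
move=> hk; have [h1 h2] := kl_consK hk.
rewrite [insK K (b :: t)]/=; case: ifP => [/andP [hb /eqP e]|ne] /=.
  have -> : kl (b :: t) = K by apply/eqP; rewrite eqn_leq hk -e lead_le_kl.
  by rewrite eqxx addn1.
rewrite IH // kl_cons.
have hl : lead (b :: t) <> K.
  case: b ne {hk h2} => /= ne; first by move/eqP; rewrite ne.
  by rewrite lead_cons; lia.
case: eqP => e1; case: eqP => e2 /=; lia.
Qed.

Definition Rc l p a :=
  count (fun r => (l < kappa r) && (odd (kappa r) == p)) (iota 0 (2 ^ a)).

Definition Fm a r := valL (insK (kappa r) (bitsN a r)).

Lemma Fm_props a r : r < 2 ^ a -> 0 < kappa r ->
  kappa (Fm a r) = (kappa r).+1 /\ size (insK (kappa r) (bitsN a r)) = a.+1.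
Proof.
move=> h k0; have e := kl_bitsN h.
rewrite /Fm kappa_valL kl_ins ?e ?eqxx // size_ins ?e ?eqxx ?size_bitsN ?addn1 //.
Qed.

Lemma flip l p a : Rc l (~~ p) a <= Rc l p a.+1.
Proof.
rewrite /Rc -size_filter.
set s := filter _ _.
have hs : forall r, r \in s -> r < 2 ^ a /\ l < kappa r /\ odd (kappa r) = ~~ p.
  move=> r; rewrite mem_filter mem_iota add0n => /andP [/andP [h1 /eqP h2] h3].
  by [].
rewrite -(size_map (Fm a)).
have -> : size (map (Fm a) s) =
  count (fun r => (l < kappa r) && (odd (kappa r) == p)) (map (Fm a) s).
  apply/esym/eqP; rewrite -all_count; apply/allP => x /mapP [r rs ->].
  have [h1 [h2 h3]] := hs r rs.
  have [e _] := Fm_props h1 ltac:(lia).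
  by rewrite e /= h3 negbK; apply/andP; split => //; lia.
apply: count_sub_uniq.
  rewrite map_inj_in_uniq; first by rewrite filter_uniq ?iota_uniq.
  move=> r1 r2 r1s r2s eF.
  have [a1 [b1 c1]] := hs r1 r1s; have [a2 [b2 c2]] := hs r2 r2s.
  have [k1 s1] := Fm_props a1 ltac:(lia); have [k2 s2] := Fm_props a2 ltac:(lia).
  have eK : kappa r1 = kappa r2 by move: k1 k2; rewrite eF => -> []. 
  have eL : insK (kappa r1) (bitsN a r1) = insK (kappa r2) (bitsN a r2).
    by rewrite -(bitsN_valL (insK (kappa r1) _)) -(bitsN_valL (insK (kappa r2) _)) s1 s2; move: eF; rewrite /Fm => ->.
  rewrite -(valL_bitsN a1) -(valL_bitsN a2).
  rewrite -(del_ins (K := kappa r1) (s := bitsN a r1)) ?kl_bitsN //; last lia.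
  rewrite eL eK del_ins ?kl_bitsN //; lia.
move=> x /mapP [r rs ->]; have [h1 [h2 h3]] := hs r rs.
rewrite mem_iota add0n; have [_ e] := Fm_props h1 ltac:(lia).
by rewrite /Fm -e valL_lt.
Qed.

Lemma count_split (P Q : pred nat) s :
  count (fun x => P x && Q x) s + count (fun x => P x && ~~ Q x) s = count P s.
Proof. elim: s => [|x s IH] //=; rewrite -IH; case: (P x); case: (Q x) => /=; lia. Qed.

Lemma R_exists l p A0 : exists a, A0 <= a /\ 2 ^ a <= 8 * Rc l p a.
Proof.
have [N0 H] := @kappa_small_udz l.+1 2 isT.
set a := maxn A0 N0.
have ha : N0 <= 2 ^ a by apply: leq_trans (ltnW (ltn_expl a (isT : 1 < 2))); lia.
have h1 := H _ ha; rewrite /count_below in h1.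
have h2 : Rc l p a + Rc l (~~ p) a = count (fun r => l < kappa r) (iota 0 (2 ^ a)).
  rewrite /Rc -(count_split (fun r => l < kappa r) (fun r => odd (kappa r) == p)).
  congr (_ + _); apply: eq_count => r /=; by case: p; case: (odd (kappa r)).
have h3 : count (fun r => l < kappa r) (iota 0 (2 ^ a)) +
          count (fun r => kappa r < l.+1) (iota 0 (2 ^ a)) = 2 ^ a.
  rewrite -[RHS](size_iota 0 (2 ^ a)) -(count_predC (fun r => l < kappa r)).
  congr (_ + _); apply: eq_count => r /=; lia.
case: (leqP (2 ^ a) (4 * Rc l p a)) => hc.
  by exists a; split; [lia | lia].
exists a.+1; split; first lia.
have := flip l p a; rewrite expnS; lia.
Qed.

Lemma size_D l n : n < 2 ^ l -> size (binary_digits n) <= l.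
Proof.
elim: l n => [|l IH] n h; first by case: n h.
rewrite D_eq; case: eqP => // _ /=; rewrite ltnS; apply: IH.
by move: h; rewrite expnS; lia.
Qed.

Lemma kappa_le l n : n < 2 ^ l -> kappa n <= l.
Proof. by move=> h; rewrite -kl_D; apply: leq_trans (kl_size _) (size_D h). Qed.

Lemma kappa_split a n r : r < 2 ^ a ->
  kappa (2 ^ a.+1 * n + r) = maxn (kappa r) (kappa n).
Proof.
move=> h; have h' : r < 2 ^ a.+1 by rewrite expnS; lia.
rewrite kappa_cat // bitsN_rcons // cat_rcons kl_cat_false kl_bitsN //.
Qed.

Theorem proposition3p2 :
  asym_automatic 2 f_kappa /\
  ~ (exists ft : nat -> nat,
        (forall n, ft n <= 1) /\ automatic 2 ft /\ asym_eq f_kappa ft).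
Proof.
split.
  exists 1, (fun _ => f_kappa) => a r h; exists 0; split => //.
  exact: (lemmaA h).
move=> [ft [_ [[m [g hg]] hE0]]].
rewrite /asym_eq /almost_all in hE0.
set E0 := (fun n : nat => ~~ (f_kappa n == ft n)) in hE0.
pose realized i := exists a r, r < 2 ^ a /\ forall n, kernel_elt 2 ft a r n = g i n.
pose g' i := if excluded_middle_informative (realized i) then g i else f_kappa.
have hg' : forall a r, r < 2 ^ a -> exists i, i < m /\ forall n, ft (2 ^ a * n + r) = g' i n.
  move=> a r h; have [i [im hi]] := hg a r h; exists i; split => // n.
  rewrite /g'; destruct (excluded_middle_informative (realized i)) as [Hr|nr]; first exact: hi.
  by exfalso; apply: nr; exists a, r.
have hgf : forall i, upper_density_zero (fun n => g' i n != f_kappa n).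
  move=> i; rewrite /g'; destruct (excluded_middle_informative (realized i)) as [[a [r [h hi]]]|Hn].
    apply: (@udz_sub _ (fun n => E0 (2 ^ a * n + r) || ~~ (f_kappa (2 ^ a * n + r) == f_kappa n))).
      move=> n /=; rewrite -hi /kernel_elt /E0 /=.
      by move=> H; case: eqP => [->|] //=.
    apply: udz_or; last exact: lemmaA h.
    by apply: udz_affine => //; rewrite expn_gt0.
  by apply: (@udz_sub _ E0) => // n /=; rewrite eqxx.
set E := fun n => has (fun i => g' i n != f_kappa n) (iota 0 m).
have hE : upper_density_zero E by apply: udz_has => i _; apply: hgf.
have [NE HE] := hE 4 isT.
set l := NE.
have hl : 4 * count E (iota 0 (2 ^ l)) <= 2 ^ l.
  by apply: HE; apply: ltnW; apply: ltn_expl.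
pose Gp p := fun n => ~~ E n && (odd (kappa n) == p).
have [p hp] : exists p, 2 ^ l <= 4 * count (Gp p) (iota 0 (2 ^ l)).
  have e1 := count_split (predC E) (fun n => odd (kappa n) == true) (iota 0 (2 ^ l)).
  have e2 := count_predC E (iota 0 (2 ^ l)).
  have e3 : count (fun x => predC E x && ~~ (odd (kappa x) == true)) (iota 0 (2 ^ l)) =
            count (Gp false) (iota 0 (2 ^ l)).
    by apply: eq_count => x; rewrite /Gp /=; case: (odd (kappa x)).
  rewrite size_iota in e2.
  case: (leqP (2 ^ l) (4 * count (Gp true) (iota 0 (2 ^ l)))) => c1.
    by exists true.
  exists false; move: e1 e2 e3 c1 hl; rewrite /Gp /=; lia.
have [N1 H1] := hE0 128 isT.
have [a [ha hR]] := R_exists l (~~ p) N1.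
set R := Rc l (~~ p) a in hR.
set N := 2 ^ a.+1 * 2 ^ l.
have hN : N1 <= N.
  apply: (leq_trans ha); apply: leq_trans (_ : 2 ^ a.+1 <= N).
    by apply: ltnW; apply: ltn_trans (ltn_expl a.+1 (isT : 1 < 2)).
  by rewrite /N leq_pmulr // expn_gt0.
have h1 := H1 N hN; rewrite /count_below in h1.
have h2 : count (Gp p) (iota 0 (2 ^ l)) * R <= count E0 (iota 0 N).
  apply: block_ge => n nl.
  case: (boolP (Gp p n)) => [/andP [nE /eqP pn]|_]; last by rewrite mul0n.
  rewrite mul1n /R /Rc; apply: leq_trans (count_mono _ (_ : 2 ^ a <= 2 ^ a.+1)); last first.
    by rewrite expnS; lia.
  apply: count_le_in => r; rewrite mem_iota add0n /= => ra /andP [lr /eqP pr].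
  have ra' : r < 2 ^ a.+1 by rewrite expnS; lia.
  have [i [im hi]] := hg' _ _ ra'.
  have gi : g' i n = f_kappa n.
    move/hasPn: nE => /(_ i); rewrite mem_iota add0n => /(_ im).
    by rewrite negbK => /eqP.
  rewrite /E0 hi gi /f_kappa kappa_split //.
  have kn := kappa_le nl.
  have -> : maxn (kappa r) (kappa n) = kappa r by lia.
  by rewrite pr pn; case: (p).
have e := leq_mul hp hR.
have Np : 0 < 2 ^ a * 2 ^ l by rewrite muln_gt0 !expn_gt0.
move: h1 h2 e Np; rewrite /N expnS; nia.
Qed.
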